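(* Let $s_{n,j}$ be the number of decorated partial Dyck paths consisting of $n$ steps and ending at level $j$, and let $S(z,u)=\sum_{n,j\ge0}s_{n,j}z^nu^j$. Put $W=\sqrt{1-6z^2+5z^4}$, with the branch satisfying $W=1$ at $z=0$, and $$r_1=\frac{1+z^2+W}{2z}.$$ Then $$S(z,u)=\frac{3-3z^2-W}{2zr_1(1-u/r_1)},$$ and for every $j\ge0$, $$[u^j]S(z,u)=\frac{3-3z^2-W}{2zr_1^{j+1}}.$$
   Context: A decorated (partial) Dyck path is a lattice path with the following properties. - It starts at $(0,0)$. - It uses up-steps $(1,1)$ and down-steps $(1,-1)$. - Each down-step is coloured either black or red. - It never goes below the $x$-axis. - An up-step is never immediately followed by a red down-step, and a red down-step is never immediately followed by an up-step. The path need not return to the $x$-axis; its level is the final $y$-coordinate. The empty path counts, with $n=0$ and $j=0$. These paths are equivalent to prefixes of skew Dyck paths, with a red down-step encoding a step $(-1,-1)$. *)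

(* Defs.v *)
From Stdlib Require Import Reals.
From Coquelicot Require Import Coquelicot.
From HB Require Import structures.
From mathcomp Require Import all_boot.
Local Open Scope nat_scope.

Set Implicit Arguments.
Unset Strict Implicit.
Unset Printing Implicit Defensive.

(* Steps of a decorated path: up-step (1,1), black down-step, red down-step. *)
Inductive step := Up | DownB | DownR.

Definition step_enc (s : step) : option bool :=
  match s with Up => None | DownB => Some true | DownR => Some false end.
Definition step_dec (o : option bool) : option step :=
  Some (match o with None => Up | Some true => DownB | Some false => DownR end).
Lemma step_encK : pcancel step_enc step_dec. Proof. by case. Qed.

HB.instance Definition _ := Finite.copy step (pcan_type step_encK).

Definition ups (w : seq step) : nat := count (pred1 Up) w.
Definition downs (w : seq step) : nat := count (fun s => s != Up) w.

Definition never_below (w : seq step) : bool :=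
  all (fun k => downs (take k w) <= ups (take k w)) (iota 0 (size w).+1).

Definition adj_ok (a b : step) : bool :=
  ~~ ((a == Up) && (b == DownR)) && ~~ ((a == DownR) && (b == Up)).
Definition no_bad_adj (w : seq step) : bool :=
  all (fun p => adj_ok p.1 p.2) (zip w (behead w)).

Definition decorated (w : seq step) : bool := never_below w && no_bad_adj w.

(* final level (meaningful when never_below w) *)
Definition level (w : seq step) : nat := ups w - downs w.

Definition s (n j : nat) : nat :=
  #|[set t : n.-tuple step | decorated t && (level t == j)]|.

(* Main.v *)
Require Import Defs.
From mathcomp Require Import all_boot.
From Stdlib Require Import Reals.
From Coquelicot Require Import Coquelicot.
From mathcomp Require Import all_boot zify.
From Stdlib Require Import Lra Psatz.
Open Scope nat_scope.

Definition ltype (w : seq step) : nat :=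
  match last Up w with Up => 0 | DownB => 1 | DownR => 2 end.

Definition P (j t : nat) (w : seq step) : bool :=
  decorated w && (level w == j) && (ltype w == t).

Lemma ups_rcons w x : ups (rcons w x) = ups w + (x == Up).
Proof. by rewrite /ups -cats1 count_cat /= addn0. Qed.
Lemma downs_rcons w x : downs (rcons w x) = downs w + (x != Up).
Proof. by rewrite /downs -cats1 count_cat /= addn0. Qed.

Lemma never_below_rcons w x :
  never_below (rcons w x) = never_below w && (downs (rcons w x) <= ups (rcons w x)).
Proof.
rewrite /never_below size_rcons -addn1 iotaD all_cat add0n all_seq1.
congr andb.
  apply: eq_in_all => k; rewrite mem_iota add0n => /andP[_ Hk].
  by rewrite -cats1 takel_cat.
by rewrite -cats1 take_oversize // size_cat /= addn1.
Qed.

Lemma no_bad_adj_cons a w : no_bad_adj (a :: w) = path adj_ok a w.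
Proof.
elim: w a => [|b w IH] a //=.
by rewrite /no_bad_adj /= -IH.
Qed.

Lemma no_bad_adj_rcons w x :
  no_bad_adj (rcons w x) = no_bad_adj w && ((w == [::]) || adj_ok (last Up w) x).
Proof.
case: w => [|a w] //=.
by rewrite !no_bad_adj_cons rcons_path.
Qed.

Lemma nb_le w : never_below w -> downs w <= ups w.
Proof.
move=> /allP /(_ (size w)); rewrite mem_iota add0n ltnSn take_size.
by move=> H; apply: H.
Qed.

Definition stepok (w : seq step) (x : step) (j t : nat) : bool :=
  match x with
  | Up => (level w + 1 == j) && (t == 0) && (ltype w != 2)
  | DownB => (level w == j + 1) && (t == 1)
  | DownR => (level w == j + 1) && (t == 2) && (ltype w != 0)
  end.

Lemma P_rcons w x j t : P j t (rcons w x) = decorated w && stepok w x j t.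
Proof.
rewrite /P /stepok /decorated /level /ltype never_below_rcons no_bad_adj_rcons
  ups_rcons downs_rcons last_rcons.
case Hnb: (never_below w) => //=.
have H := nb_le w Hnb.
case: (eqVneq w [::]) => [->|Hw] /=.
  by case: x => /=; rewrite ?addn0 ?add0n ?subn0 ?sub0n ?andbT //; case: j => [|j]; case: t => [|[|[|t]]].
case: (no_bad_adj w) => //=; last by rewrite !andbF.
move: H; set U := ups w; set Dn := downs w; set a := last Up w => H.
case: x; case: a => /=; case: t => [|[|[|t]]] /=; rewrite ?andbF ?andbT //.
all: try (apply/idP/idP; [move=> /andP[/eqP H1 H2]; apply/eqP; lia| move=> /eqP H1; apply/andP; split; [apply/eqP|]; lia]).
all: try (apply/idP/idP; [move=> /eqP H1; apply/eqP; lia| move=> /eqP H1; apply/eqP; lia]).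
all: idtac.
Qed.

Fixpoint N (n j t : nat) : nat :=
  match n with
  | 0 => if (j == 0) && (t == 0) then 1 else 0
  | n'.+1 =>
    match t with
    | 0 => match j with 0 => 0 | j'.+1 => N n' j' 0 + N n' j' 1 end
    | 1 => N n' j.+1 0 + N n' j.+1 1 + N n' j.+1 2
    | 2 => N n' j.+1 1 + N n' j.+1 2
    | _ => 0
    end
  end.

Definition steps := [:: Up; DownB; DownR].

Fixpoint words (n : nat) : seq (seq step) :=
  match n with
  | 0 => [:: [::]]
  | n'.+1 => [seq rcons w x | w <- words n', x <- steps]
  end.

Lemma count_ext j t w :
  count (P j t) [seq rcons w x | x <- steps] =
  match t with
  | 0 => match j with 0 => 0 | j'.+1 => P j' 0 w + P j' 1 w end
  | 1 => P j.+1 0 w + P j.+1 1 w + P j.+1 2 w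
  | 2 => P j.+1 1 w + P j.+1 2 w
  | _ => 0
  end.
Proof.
rewrite /= !P_rcons /stepok /P.
case: (decorated w) => /=; last by case: t => [|[|[|t]]] //; case: j.
rewrite /ltype; case: (last Up w) => /=;
case: t => [|[|[|t]]] /=; case: j => [|j] /=; rewrite ?addn1 ?eqSS ?andbT ?andbF ?addn0 //=.
all: try by case: (level w == _).
all: idtac.
Qed.

Lemma words_count n j t : count (P j t) (words n) = N n j t.
Proof.
elim: n j t => [|n IH] j t.
  rewrite /= addn0 /P /decorated /level /ltype /=.
  by case: j => [|j]; case: t => [|[|[|t]]].
rewrite /= count_flatten -map_comp.
have -> : sumn [seq (count (P j t) \o (fun w => [seq rcons w x | x <- steps])) i | i <- words n]
  = sumn [seq (match t with
  | 0 => match j with 0 => 0 | j'.+1 => P j' 0 w + P j' 1 w end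
  | 1 => P j.+1 0 w + P j.+1 1 w + P j.+1 2 w
  | 2 => P j.+1 1 w + P j.+1 2 w
  | _ => 0
  end) | w <- words n].
  by congr sumn; apply: eq_map => w; exact: count_ext.
case: t => [|[|[|t]]]; try case: j => [|j]; rewrite /= -?IH;
  elim: (words n) => [|w L IHL] //=; rewrite IHL; lia.
Qed.

Lemma mem_words n w : (w \in words n) = (size w == n).
Proof.
elim: n w => [|n IH] w.
  by case: w.
apply/allpairsP/idP => [[[w' x] [/= Hw _ ->]]|].
  by rewrite size_rcons eqSS -IH.
case/lastP: w => [//|w' x]; rewrite size_rcons eqSS -IH => Hw.
exists (w', x); split => //; by case: x.
Qed.

Lemma uniq_words n : uniq (words n).
Proof.
elim: n => [|n IH] //.
change (uniq [seq rcons w x | w <- words n, x <- steps]).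
apply: allpairs_uniq => //.
by move=> [a b] [c d] _ _ /= /rcons_inj.
Qed.

Lemma s_N n j : s n j = N n j 0 + N n j 1 + N n j 2.
Proof.
rewrite /s cardsE cardE.
set Q := fun w : seq step => decorated w && (level w == j).
have -> : size (enum [pred t : n.-tuple step | decorated t && (level t == j)])
  = size [seq w <- words n | Q w].
  rewrite -(size_map val); apply: perm_size; apply: uniq_perm.
  - by rewrite (map_inj_uniq val_inj) enum_uniq.
  - by rewrite filter_uniq // uniq_words.
  move=> w; rewrite mem_filter mem_words; apply/mapP/idP.
    move=> [t Ht ->]; rewrite mem_enum in Ht; rewrite size_tuple eqxx andbT.
    exact: Ht.
  move=> /andP[HQ Hs]; exists (Tuple Hs) => //.
  by rewrite mem_enum.
rewrite size_filter -!words_count.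
elim: (words n) => [|w L IHL] //=.
rewrite IHL /Q /P /ltype.
case: (decorated w && (level w == j)) => /=; last lia.
case: (last Up w) => /=; lia.
Qed.

Lemma N_big n j t : n < j -> N n j t = 0.
Proof.
elim: n j t => [|n IH] j t Hj /=.
  by case: j Hj.
case: t => [|[|[|t]]] //.
- case: j Hj => [//|j] Hj; rewrite !IH //.
- rewrite !IH //; lia.
- rewrite !IH //; lia.
Qed.

Lemma N_le n j t : N n j t <= 3 ^ n.
Proof.
elim: n j t => [|n IH] j t /=.
  by case: (_ && _).
rewrite expnS.
case: t => [|[|[|t]]] //.
- case: j => [|j] //; have := IH j 0; have := IH j 1; lia.
- have := IH j.+1 0; have := IH j.+1 1; have := IH j.+1 2; lia.
- have := IH j.+1 1; have := IH j.+1 2; lia.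
Qed.

Open Scope R_scope.

Definition A (u : R) (n j t : nat) : R :=
  sum_f_R0 (fun i => INR (N n (addn i j) t) * u ^ i) n.

Lemma A_Sj0 u n j : A u (S n) (S j) 0 = A u n j 0 + A u n j 1.
Proof.
rewrite /A tech5 N_big; last by apply/ltP; lia.
rewrite Rmult_0_l Rplus_0_r -plus_sum; apply: PartSum.sum_eq => i _.
by rewrite addnS /= plus_INR; ring.
Qed.

Lemma A_S00 u n : A u (S n) 0 0 = u * (A u n 0 0 + A u n 0 1).
Proof.
rewrite /A decomp_sum; last by apply/ltP.
rewrite /= Rmult_0_l Rplus_0_l -plus_sum scal_sum; apply: PartSum.sum_eq => i _.
rewrite !addn0 plus_INR; ring.
Qed.

Lemma A_S1 u n j : A u (S n) j 1 = A u n (S j) 0 + A u n (S j) 1 + A u n (S j) 2.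
Proof.
rewrite /A tech5.
have -> : N (S n) (addn (S n) j) 1 = 0%nat by rewrite /= !N_big //; apply/ltP; lia.
rewrite Rmult_0_l Rplus_0_r -!plus_sum; apply: PartSum.sum_eq => i _.
by rewrite !addnS /= !plus_INR; ring.
Qed.

Lemma A_S2 u n j : A u (S n) j 2 = A u n (S j) 1 + A u n (S j) 2.
Proof.
rewrite /A tech5.
have -> : N (S n) (addn (S n) j) 2 = 0%nat by rewrite /= !N_big //; apply/ltP; lia.
rewrite Rmult_0_l Rplus_0_r -!plus_sum; apply: PartSum.sum_eq => i _.
by rewrite !addnS /= !plus_INR; ring.
Qed.

Lemma A_0 u j t : A u 0 j t = if (j == 0%nat) && (t == 0%nat) then 1 else 0.
Proof.
rewrite /A /= add0n.
by case: (_ && _); rewrite /=; ring.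
Qed.

Lemma INR_expn3 n : INR (expn 3 n) = 3 ^ n.
Proof.
elim: n => [|n IH]; first by rewrite expn0 /=.
by rewrite expnS mult_INR IH /=; ring.
Qed.

Lemma N_leR n j t : INR (N n j t) <= 3 ^ n.
Proof. rewrite -INR_expn3; apply: le_INR; apply/leP; exact: N_le. Qed.

Lemma pow_le1 x n : 0 <= x <= 1 -> x ^ n <= 1.
Proof.
move=> H; elim: n => [|n IH] /=; first lra.
have : 0 <= x ^ n by apply: pow_le; lra.
nra.
Qed.

Lemma A_bound u n j t : Rabs u <= 1 -> Rabs (A u n j t) <= 6 ^ n.
Proof.
move=> Hu.
apply: Rle_trans (sum_f_R0_triangle _ _) _.
apply: Rle_trans (_ : sum_f_R0 (fun _ => 3 ^ n) n <= _).
  apply: sum_Rle => i _.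
  rewrite Rabs_mult Rabs_pos_eq; last exact: pos_INR.
  rewrite -RPow_abs.
  have H1 : Rabs u ^ i <= 1 by apply: pow_le1; split; [exact: Rabs_pos|done].
  have H2 := N_leR n (addn i j) t.
  have H3 := pos_INR (N n (addn i j) t).
  have H4 : 0 <= Rabs u ^ i by apply: pow_le; exact: Rabs_pos.
  nra.
rewrite sum_cte.
have -> : 6 ^ n = 2 ^ n * 3 ^ n by rewrite -Rpow_mult_distr; congr (_ ^ _); lra.
rewrite Rmult_comm; apply: Rmult_le_compat_r; first by apply: pow_le; lra.
have H : leq (S n) (expn 2 n) := @ltn_expl 2 n isT.
move/leP: H => /le_INR; rewrite -/(INR (S n)).
suff -> : INR (expn 2 n) = 2 ^ n by [].
elim: n {Hu} => [|n IH]; first by rewrite expn0 /=.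
by rewrite expnS mult_INR IH /=; ring.
Qed.

Definition T (u z : R) (j t : nat) : R := Series (fun n => A u n j t * z ^ n).

Lemma geom6 z : Rabs z < 1/6 -> is_series (fun n => (6 * Rabs z) ^ n) (/ (1 - 6 * Rabs z)).
Proof.
move=> Hz; apply: is_series_geom.
rewrite Rabs_pos_eq; have := Rabs_pos z; lra.
Qed.

Lemma term_bound u z n j t : Rabs u <= 1 ->
  Rabs (A u n j t * z ^ n) <= (6 * Rabs z) ^ n.
Proof.
move=> Hu; rewrite Rabs_mult -RPow_abs Rpow_mult_distr.
apply: Rmult_le_compat_r; first by apply: pow_le; exact: Rabs_pos.
exact: A_bound.
Qed.

Lemma T_is u z j t : Rabs u <= 1 -> Rabs z < 1/6 ->
  is_series (fun n => A u n j t * z ^ n) (T u z j t).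
Proof.
move=> Hu Hz; apply: Series_correct.
apply: (ex_series_le _ (fun n => (6 * Rabs z) ^ n)).
  move=> n; exact: term_bound.
eexists; exact: geom6.
Qed.

Lemma T_bound u z j t : Rabs u <= 1 -> Rabs z < 1/6 ->
  Rabs (T u z j t) <= / (1 - 6 * Rabs z).
Proof.
move=> Hu Hz.
have Hex : ex_series (fun n => Rabs (A u n j t * z ^ n)).
  apply: (ex_series_le _ (fun n => (6 * Rabs z) ^ n)).
    move=> n; rewrite /norm /= /abs /= Rabs_Rabsolu; exact: term_bound.
  eexists; exact: geom6.
apply: Rle_trans (Series_Rabs _ Hex) _.
rewrite -(is_series_unique _ _ (geom6 z Hz)).
apply: Series_le; last by eexists; exact: geom6.
move=> n; split; [exact: Rabs_pos | exact: term_bound].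
Qed.

Lemma shift_eq (a b : nat -> R) l lb c : is_series a l -> is_series b lb ->
  (forall n, a (S n) = c * b n) -> l = a 0%nat + c * lb.
Proof.
move=> Ha Hb Hab.
have H1 : is_series (fun n => a (S n)) (l - a 0%nat).
  apply: is_series_incr_1.
  have -> : plus (l - a 0%nat) (a 0%nat) = l by rewrite /plus /=; ring.
  exact: Ha.
have H2 : is_series (fun n => a (S n)) (c * lb).
  apply: (is_series_ext (fun n => c * b n)) => [n|]; first by rewrite Hab.
  exact: (is_series_scal_l c _ _ Hb).
have := is_series_unique _ _ H1; rewrite (is_series_unique _ _ H2); lra.
Qed.

Lemma plus_is (a b : nat -> R) la lb : is_series a la -> is_series b lb ->
  is_series (fun n => a n + b n) (la + lb).
Proof. move=> Ha Hb; exact: (is_series_plus _ _ _ _ Ha Hb). Qed.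

Arguments plus_is {a b la lb}.

Lemma T_00 u z : Rabs u <= 1 -> Rabs z < 1/6 ->
  T u z 0 0 = 1 + z * u * (T u z 0 0 + T u z 0 1).
Proof.
move=> Hu Hz.
have E := @shift_eq _ _ _ _ (z * u) (T_is u z 0 0 Hu Hz) (plus_is (T_is u z 0 0 Hu Hz) (T_is u z 0 1 Hu Hz)); rewrite {1}E {E}.
  by rewrite A_0 /=; ring.
by move=> n; rewrite A_S00 /=; ring.
Qed.

Lemma T_S0 u z j : Rabs u <= 1 -> Rabs z < 1/6 ->
  T u z (S j) 0 = z * (T u z j 0 + T u z j 1).
Proof.
move=> Hu Hz.
have E := @shift_eq _ _ _ _ (z) (T_is u z (S j) 0 Hu Hz) (plus_is (T_is u z j 0 Hu Hz) (T_is u z j 1 Hu Hz)); rewrite {1}E {E}.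
  by rewrite A_0 /=; ring.
by move=> n; rewrite A_Sj0 /=; ring.
Qed.

Lemma T_1 u z j : Rabs u <= 1 -> Rabs z < 1/6 ->
  T u z j 1 = z * (T u z (S j) 0 + T u z (S j) 1 + T u z (S j) 2).
Proof.
move=> Hu Hz.
have E := @shift_eq _ _ _ _ (z) (T_is u z j 1 Hu Hz) (plus_is (plus_is (T_is u z (S j) 0 Hu Hz) (T_is u z (S j) 1 Hu Hz)) (T_is u z (S j) 2 Hu Hz)); rewrite {1}E {E}.
  by rewrite A_0 andbF /=; ring.
by move=> n; rewrite A_S1 /=; ring.
Qed.

Lemma T_2 u z j : Rabs u <= 1 -> Rabs z < 1/6 ->
  T u z j 2 = z * (T u z (S j) 1 + T u z (S j) 2).
Proof.
move=> Hu Hz.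
have E := @shift_eq _ _ _ _ (z) (T_is u z j 2 Hu Hz) (plus_is (T_is u z (S j) 1 Hu Hz) (T_is u z (S j) 2 Hu Hz)); rewrite {1}E {E}.
  by rewrite A_0 andbF /=; ring.
by move=> n; rewrite A_S2 /=; ring.
Qed.

Lemma contraction (E : nat -> nat -> R) (z u K : R) :
  Rabs z < 1/6 -> Rabs u <= 1 ->
  E 0%nat 0%nat = z * u * (E 0%nat 0%nat + E 0%nat 1%nat) ->
  (forall j, E (S j) 0%nat = z * (E j 0%nat + E j 1%nat)) ->
  (forall j, E j 1%nat = z * (E (S j) 0%nat + E (S j) 1%nat + E (S j) 2%nat)) ->
  (forall j, E j 2%nat = z * (E (S j) 1%nat + E (S j) 2%nat)) ->
  (forall j t, (t <= 2)%coq_nat -> Rabs (E j t) <= K) ->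
  forall j t, (t <= 2)%coq_nat -> E j t = 0.
Proof.
move=> Hz Hu H00 HS0 H1 H2 HK.
have Hz0 := Rabs_pos z.
have Hu0 := Rabs_pos u.
have key : forall k j t, (t <= 2)%coq_nat -> Rabs (E j t) <= (3 * Rabs z) ^ k * K.
  elim=> [|k IH] j t Ht.
    rewrite /= Rmult_1_l; exact: HK.
  have HM : 0 <= (3 * Rabs z) ^ k * K.
    apply: Rle_trans (Rabs_pos (E j t)) (IH j t Ht).
  set M := (3 * Rabs z) ^ k * K in IH HM *.
  have -> : (3 * Rabs z) ^ (S k) * K = 3 * Rabs z * M by rewrite /M /=; ring.
  have T2 : forall x y, Rabs x <= M -> Rabs y <= M -> Rabs (z * (x + y)) <= 3 * Rabs z * M.
    move=> x y Hx Hy; rewrite Rabs_mult.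
    have := Rabs_triang x y; nra.
  have T3 : forall x y w, Rabs x <= M -> Rabs y <= M -> Rabs w <= M ->
      Rabs (z * (x + y + w)) <= 3 * Rabs z * M.
    move=> x y w Hx Hy Hw; rewrite Rabs_mult.
    have := Rabs_triang (x + y) w; have := Rabs_triang x y; nra.
  have Ht' : (t = 0 \/ t = 1 \/ t = 2)%nat by lia.
  have L0 : (0 <= 2)%coq_nat by lia.
  have L1 : (1 <= 2)%coq_nat by lia.
  have L2 : (2 <= 2)%coq_nat by lia.
  case: Ht' => [->|[->|->]].
  - case: j => [|j].
      rewrite H00 Rabs_mult Rabs_mult.
      have := Rabs_triang (E 0%nat 0%nat) (E 0%nat 1%nat).
      have := IH 0%nat 0%nat L0; have := IH 0%nat 1%nat L1.
      move=> A1 A2 A3.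
      have : Rabs u * Rabs (E 0%nat 0%nat + E 0%nat 1%nat) <= 2 * M by nra.
      nra.
    rewrite HS0; apply: T2; exact: IH.
  - rewrite H1; apply: T3; exact: IH.
  - rewrite H2; apply: T2; exact: IH.
move=> j t Ht.
have HK0 : 0 <= K by apply: Rle_trans (Rabs_pos (E j t)) (HK j t Ht).
apply: Rabs_eq_0; apply: Rle_antisym; last exact: Rabs_pos.
apply: Rnot_lt_le => Hpos.
have Hq : Rabs (3 * Rabs z) < 1 by rewrite Rabs_pos_eq; lra.
have Hy : 0 < Rabs (E j t) / (K + 1) by apply: Rdiv_lt_0_compat; lra.
have [N0 HN] := pow_lt_1_zero _ Hq _ Hy.
have := HN N0 (le_n _).
rewrite Rabs_pos_eq; last by apply: pow_le; lra.
move=> HN1.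
have HpN : 0 <= (3 * Rabs z) ^ N0 by apply: pow_le; lra.
have := key N0 j t Ht.
have : (3 * Rabs z) ^ N0 * (K + 1) < Rabs (E j t).
  have := Rmult_lt_compat_r (K + 1) _ _ ltac:(lra) HN1.
  by rewrite /Rdiv Rmult_assoc Rinv_l; [rewrite Rmult_1_r|lra].
nra.
Qed.

Definition Gf (u q d r : R) (j t : nat) : R :=
  match t with
  | 0%nat => q ^ j / (1 - u * q)
  | 1%nat => d * q ^ j / (1 - u * q)
  | 2%nat => r * q ^ j / (1 - u * q)
  | _ => 0
  end.

Lemma G_eqs (u z q d r : R) :
  q = z * (1 + d) -> d = z * q * (1 + d + r) -> r = z * q * (d + r) ->
  1 - u * q <> 0 ->
  [/\ Gf u q d r 0 0 = 1 + z * u * (Gf u q d r 0 0 + Gf u q d r 0 1),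
      (forall j, Gf u q d r (S j) 0 = z * (Gf u q d r j 0 + Gf u q d r j 1)),
      (forall j, Gf u q d r j 1 = z * (Gf u q d r (S j) 0 + Gf u q d r (S j) 1 + Gf u q d r (S j) 2))
    & (forall j, Gf u q d r j 2 = z * (Gf u q d r (S j) 1 + Gf u q d r (S j) 2))].
Proof.
move=> k1 k2 k3 Hn; split.
- rewrite /Gf /= k1; rewrite k1 in Hn; field; exact Hn.
- move=> j; rewrite /Gf /=; rewrite {1}k1; field; done.
- move=> j; rewrite /Gf /=; rewrite {1}k2; field; done.
- move=> j; rewrite /Gf /=; rewrite {1}k3; field; done.
Qed.

Definition Wf z := sqrt (1 - 6 * z ^ 2 + 5 * z ^ 4).
Definition Df z := 1 + z ^ 2 + Wf z.
Definition qf z := 2 * z / Df z.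
Definition df z := (1 - z ^ 2 - Wf z) / Df z.
Definition rf z := z * qf z * df z / (1 - z * qf z).

Lemma zalg z : Rabs z < 1/12 ->
  1 <= Df z /\ Rabs (qf z) < 1/6 /\ qf z = z * (1 + df z) /\
      df z = z * qf z * (1 + df z + rf z) /\ rf z = z * qf z * (df z + rf z)
    /\ 1 + df z + rf z = (3 - 3 * z ^ 2 - Wf z) / Df z.
Proof.
move=> Hz.
have Hz' : -1/12 < z < 1/12 by split; [have := Rabs_Ropp z; have := Rle_abs (- z) | have := Rle_abs z]; rewrite ?Rabs_Ropp; lra.
have Hz2 : z ^ 2 < 1/144 by nra.
have HP : 0 <= 1 - 6 * z ^ 2 + 5 * z ^ 4 by nra.
have HW0 : 0 <= Wf z by apply: sqrt_pos.
have HWW : Wf z * Wf z = 1 - 6 * z ^ 2 + 5 * z ^ 4 by apply: sqrt_sqrt.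
have HD : 1 <= Df z by rewrite /Df; nra.
have HDn : Df z <> 0 by lra.
have qD : qf z * Df z = 2 * z by rewrite /qf; field.
have Hq : -1/6 < qf z < 1/6 by split; nra.
have Hzq : 1 - z * qf z <> 0 by nra.
have Hb : 1 - z ^ 2 + Wf z <> 0 by nra.
have k1 : qf z = z * (1 + df z) by rewrite /qf /df /Df; field; rewrite -/(Df z).
have k4 : 1 + df z + rf z = (3 - 3 * z ^ 2 - Wf z) / Df z.
  have E : 1 + df z + rf z - (3 - 3 * z ^ 2 - Wf z) / Df z
    = (4 * z ^ 2 * (1 - z ^ 2) - (1 - z ^ 2 - Wf z) * (1 - z ^ 2 + Wf z)) / (Df z * (1 - z ^ 2 + Wf z)).
    have HD' : 1 + z ^ 2 + Wf z <> 0 by rewrite -/(Df z).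
    have Hzq' : 1 + z ^ 2 + Wf z - 2 * z * z <> 0 by nra.
    rewrite /rf /df /qf /Df. field. by split.
  have E2 : 4 * z ^ 2 * (1 - z ^ 2) - (1 - z ^ 2 - Wf z) * (1 - z ^ 2 + Wf z) = 0 by nra.
  rewrite E2 /Rdiv Rmult_0_l in E; lra.
split; first exact: HD.
split; first by rewrite Rabs_lt_between; lra.
split; first exact: k1.
split.
  have HD' : 1 + z ^ 2 + Wf z <> 0 by rewrite -/(Df z).
  rewrite k4 /qf /df /Df. field_simplify_eq => //. nra.
split; last exact: k4.
rewrite /rf; field => //.
Qed.

Lemma Gf_bound u q d r j t : Rabs q <= 1 -> 1 - u * q <> 0 ->
  Rabs (Gf u q d r j t) <= (1 + Rabs d + Rabs r) / Rabs (1 - u * q).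
Proof.
move=> Hq Hw.
have Hpos : 0 < / Rabs (1 - u * q) by apply: Rinv_0_lt_compat; apply: Rabs_pos_lt.
have Hqj : Rabs (q ^ j) <= 1 by rewrite -RPow_abs; apply: pow_le1; split => //; exact: Rabs_pos.
have Hd := Rabs_pos d. have Hr := Rabs_pos r.
have Hqj0 := Rabs_pos (q ^ j).
rewrite /Rdiv.
case: t => [|[|[|t]]] /=; rewrite ?Rabs_mult ?Rabs_inv ?Rabs_R0;
  try (apply: Rmult_le_compat_r; [exact: Rlt_le|]); nra.
Qed.

Lemma core u z : Rabs z < 1/12 -> Rabs u <= 1 ->
  forall j t, (t <= 2)%coq_nat -> T u z j t = Gf u (qf z) (df z) (rf z) j t.
Proof.
move=> Hz Hu j t Ht.
have [HD [Hq [k1 [k2 [k3 k4]]]]] := zalg z Hz.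
have Hz6 : Rabs z < 1/6 by lra.
have Hw : 1 - u * qf z <> 0.
  have := Rabs_mult u (qf z); have := Rle_abs (u * qf z); have := Rabs_pos (qf z); nra.
have [G0 GS G1 G2] := @G_eqs u z _ _ _ k1 k2 k3 Hw.
suff : T u z j t - Gf u (qf z) (df z) (rf z) j t = 0 by lra.
apply: (@contraction (fun j t => T u z j t - Gf u (qf z) (df z) (rf z) j t) z u
  (/ (1 - 6 * Rabs z) + (1 + Rabs (df z) + Rabs (rf z)) / Rabs (1 - u * qf z)) Hz6 Hu) => //.
- rewrite {1}T_00 // {1}G0; ring.
- move=> j'; rewrite {1}T_S0 // {1}GS; ring.
- move=> j'; rewrite {1}T_1 // {1}G1; ring.
- move=> j'; rewrite {1}T_2 // {1}G2; ring.
- move=> j' t' _.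
  apply: Rle_trans (Rabs_triang _ _) _; rewrite Rabs_Ropp.
  apply: Rplus_le_compat; first exact: T_bound.
  apply: Gf_bound => //; lra.
Qed.



Lemma sum0 (f : nat -> R) n : sum_f_R0 (fun i => f i * 0 ^ i) n = f 0%nat.
Proof.
elim: n => [|n IH] /=; first ring.
rewrite IH; ring.
Qed.

Lemma A0_eq n j t : A 0 n j t = INR (N n j t).
Proof. by rewrite /A sum0 add0n. Qed.

Theorem theorem2 :
  exists delta : R, 0 < delta /\
  (forall z u : R, z <> 0 -> Rabs z < delta -> Rabs u < delta ->
     let W := sqrt (1 - 6 * z ^ 2 + 5 * z ^ 4) in
     let r1 := (1 + z ^ 2 + W) / (2 * z) in
     is_series (fun n : nat => sum_n (fun j : nat => INR (s n j) * u ^ j) n * z ^ n)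
       ((3 - 3 * z ^ 2 - Wf z) / (2 * z * (Df z / (2 * z)) * (1 - u / (Df z / (2 * z)))))) /\
  (forall (j : nat) (z : R), z <> 0 -> Rabs z < delta ->
     let W := sqrt (1 - 6 * z ^ 2 + 5 * z ^ 4) in
     let r1 := (1 + z ^ 2 + W) / (2 * z) in
     is_series (fun n : nat => INR (s n j) * z ^ n)
       ((3 - 3 * z ^ 2 - Wf z) / (2 * z * (Df z / (2 * z)) ^ (j + 1)))).
Proof.
exists (1/12); split; first lra.
have L0 : (0 <= 2)%coq_nat by lia.
have L1 : (1 <= 2)%coq_nat by lia.
have L2 : (2 <= 2)%coq_nat by lia.
split.
- move=> z u Hz0 Hz Hu; cbv zeta; change (sqrt (1 - 6 * z ^ 2 + 5 * z ^ 4)) with (Wf z); change (1 + z ^ 2 + Wf z) with (Df z).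
  have Hu1 : Rabs u <= 1 by lra.
  have Hz6 : Rabs z < 1/6 by lra.
  have [HD [Hq [k1 [k2 [k3 k4]]]]] := zalg z Hz.
  have Hw : 1 - u * qf z <> 0.
    have := Rabs_mult u (qf z); have := Rle_abs (u * qf z); have := Rabs_pos (qf z); nra.
  have H := plus_is (plus_is (T_is u z 0 0 Hu1 Hz6) (T_is u z 0 1 Hu1 Hz6)) (T_is u z 0 2 Hu1 Hz6).
  rewrite !core // /Gf /= in H.
  set l := (X in is_series _ X) in H.
  have -> : @eq R ((3 - 3 * z ^ 2 - Wf z) / (2 * z * (Df z / (2 * z)) * (1 - u / (Df z / (2 * z))))) l.
    have -> : (3 - 3 * z ^ 2 - Wf z) = (1 + df z + rf z) * Df z.
      rewrite k4; field; lra.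
    rewrite /l.
    rewrite /qf in Hw.
    have HDn : Df z <> 0 by lra.
    rewrite /qf. field. split => //; split => //.
    move=> E; apply: Hw.
    have -> : 1 - u * (2 * z / Df z) = (Df z - u * (2 * z)) / Df z by field.
    by rewrite E /Rdiv Rmult_0_l.
  apply: (is_series_ext _ _ _ _ H) => n.
  rewrite sum_n_Reals /A -!Rmult_plus_distr_r -!plus_sum; congr (_ * _).
  apply: PartSum.sum_eq => i _; rewrite s_N !plus_INR !addn0; ring.
- move=> j z Hz0 Hz; cbv zeta; change (sqrt (1 - 6 * z ^ 2 + 5 * z ^ 4)) with (Wf z); change (1 + z ^ 2 + Wf z) with (Df z).
  have Hz6 : Rabs z < 1/6 by lra.
  have H0 : Rabs 0 <= 1 by rewrite Rabs_R0; lra.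
  have [HD [Hq [k1 [k2 [k3 k4]]]]] := zalg z Hz.
  have H := plus_is (plus_is (T_is 0 z j 0 H0 Hz6) (T_is 0 z j 1 H0 Hz6)) (T_is 0 z j 2 H0 Hz6).
  rewrite !core // /Gf /= in H.
  set l := (X in is_series _ X) in H.
  have -> : @eq R ((3 - 3 * z ^ 2 - Wf z) / (2 * z * (Df z / (2 * z)) ^ (j + 1))) l.
    have -> : (3 - 3 * z ^ 2 - Wf z) = (1 + df z + rf z) * Df z.
      rewrite k4; field; lra.
    have HDn : Df z <> 0 by lra.
    rewrite /l /qf.
    rewrite pow_add /= Rmult_1_r.
    have E : 2 * z / Df z = / (Df z / (2 * z)) by field.
    have H2z : 2 * z <> 0 by apply: Rmult_integral_contrapositive_currified => //; lra.
    have Hx : Df z / (2 * z) <> 0.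
      by rewrite /Rdiv; apply: Rmult_integral_contrapositive_currified => //; apply: Rinv_neq_0_compat.
    have Hxj := pow_nonzero _ j Hx.
    rewrite E pow_inv; field; split => //.
  apply: (is_series_ext _ _ _ _ H) => n.
  by rewrite !A0_eq s_N !plus_INR !Rmult_plus_distr_r.
Qed.
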